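(* The classical monodromy operator $h_\ast:\hat H\to\hat H$ and the operator $\mathrm{Var}^{-1}:\hat H\to\hat H^\ast$ satisfy $$h_\ast=(-1)^n\,\mathrm{Var}\,(\mathrm{Var}^{-1})^T,$$ where $\mathrm{Var}:\hat H^\ast\to\hat H$ is the inverse of $\mathrm{Var}^{-1}$ and $(\mathrm{Var}^{-1})^T:\hat H=\hat H^{\ast\ast}\to\hat H^\ast$ is the transpose of $\mathrm{Var}^{-1}$.
   Context: Let $f=(f_1,\dots,f_{p+1}):(\mathbb C^{n+p},0)\to(\mathbb C^{p+1},0)$ be an analytic germ such that $V=\{f_1=\dots=f_{p+1}=0\}$ is an $(n-1)$-dimensional and $V'=\{f_1=\dots=f_p=0\}$ an $n$-dimensional isolated complete intersection singularity. For a small ball $B_\delta$ and suitable small generic $t$ (with $0<|t_1|\ll\dots\ll|t_{p+1}|\ll\delta$), $V_t=\{x\in B_\delta:f_j(x)=t_j,1\le j\le p+1\}$ and $V'_t=\{x\in B_\delta:f_j(x)=t_j,1\le j\le p\}$; $\hat H=H_n(V'_t,V_t)$, $\hat H^\ast=\operatorname{Hom}(\hat H,\mathbb Z)$. The intersection form $\langle\cdot,\cdot\rangle$ on $\hat H$ is the pullback via the boundary map $\hat H\to H_{n-1}(V_t)$ of the intersection form of $V_t$. Let $\tilde f_{p+1}:V'_t\to\mathbb C$ be a generic perturbation of $f_{p+1}|_{V'_t}$ with only nondegenerate critical points, with distinct critical values $z_1,\dots,z_\nu$, and $z_0$ a noncritical value with $|z_0|>|z_j|$. Paths $u_j$ from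 $z_j$ to $z_0$ in the disc $D=\{|z|\le|z_0|\}$, non-self-intersecting, pairwise meeting only at $z_0$, numbered clockwise by order of arrival at $z_0$ starting from $\partial D$, define (up to orientation) thimbles $\hat\delta_j\in\hat H$ forming a distinguished basis; $\{\nabla_j\}$ is the dual basis. $\mathrm{Var}^{-1}:\hat H\to\hat H^\ast$ is defined by $\mathrm{Var}^{-1}(\hat\delta_i)=(-1)^{n(n+1)/2}\nabla_i-\sum_{j<i}\langle\hat\delta_i,\hat\delta_j\rangle\nabla_j$ (independent of the distinguished basis). The classical monodromy $h_\ast:\hat H\to\hat H$ is the automorphism induced by going once counterclockwise around $\partial D$; equivalently $h_\ast=h_{\hat\delta_1}\circ\dots\circ h_{\hat\delta_\nu}$ with $h_{\hat\delta}(y)=y+(-1)^{n(n+1)/2}\langle y,\hat\delta\rangle\hat\delta$. *)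

(* Defs.v *)
(* Algebraic (lattice) model of H^ = H_n(V'_t, V_t) in the
   coordinates of a distinguished basis: H^ = Z^nu as column vectors, the
   thimble delta_i being the i-th standard basis vector; H^* = Z^nu with the
   dual basis nabla_j as standard basis. *)
From HB Require Import structures.
From mathcomp Require Import all_boot all_order all_algebra.
Set Implicit Arguments. Unset Strict Implicit. Unset Printing Implicit Defensive.
Import Order.TTheory GRing.Theory Num.Theory.
Local Open Scope ring_scope.

Definition eps (n : nat) : int := (-1) ^+ (n * n.+1 %/ 2).

Definition thimble (nu : nat) (i : 'I_nu) : 'cV[int]_nu := delta_mx i 0.

(* intersection form on H^: <x,y> = x^T B y, where B i j = <delta_i, delta_j>
   (pullback of the intersection form of V_t under the boundary map) *)
Definition iform (nu : nat) (B : 'M[int]_nu) (x y : 'cV[int]_nu) : int :=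
  (x^T *m B *m y) 0 0.

(* Picard--Lefschetz transformation h_delta(y) = y + eps <y,delta> delta,
   as a matrix acting on column vectors *)
Definition PLmx (n nu : nat) (B : 'M[int]_nu) (d : 'cV[int]_nu) : 'M[int]_nu :=
  \matrix_(k < nu, l < nu)
    ((k == l)%:R + eps n * iform B (delta_mx l 0) d * d k 0).

Definition monodromy (n nu : nat) (B : 'M[int]_nu) : 'M[int]_nu :=
  foldr (fun i acc => PLmx n B (thimble i) *m acc) 1%:M (enum 'I_nu).

(* Var^{-1} : H^ -> H^*, Var^{-1}(delta_i) = eps nabla_i - sum_{j<i} <delta_i,delta_j> nabla_j;
   column i of the matrix holds the coordinates of Var^{-1}(delta_i). *)
Definition VarInv (n nu : nat) (B : 'M[int]_nu) : 'M[int]_nu :=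
  \matrix_(j < nu, i < nu)
    (eps n * (j == i)%:R - (j < i)%N%:R * B i j).

Definition Var (n nu : nat) (B : 'M[int]_nu) : 'M[int]_nu := invmx (VarInv n B).

(* Main.v *)
Require Import Defs.
From HB Require Import structures.
From mathcomp Require Import all_boot all_order all_algebra.
From mathcomp Require Import zify ring.
Import Order.TTheory GRing.Theory Num.Theory.
Local Open Scope ring_scope.

Lemma arith m : ((m * m.-1) %/ 2 + (m.+1 * m.+2) %/2 = m * m + m + 1)%N.
Proof.
have h1 : (m * m.-1 = m * m - m)%N by case: m => //= p; rewrite mulnSr addnK.
have h2 : (m.+1 * m.+2 = m * m + 3 * m + 2)%N by rewrite !mulSn !mulnS; lia.
have h3 : ((m * m + m) %% 2 = 0)%N.
  by apply/eqP; rewrite modn2 oddD oddM; case: (odd m).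
have h4 : (m <= m * m)%N by case: m {h1 h2 h3} => // p; rewrite leq_pmulr.
rewrite h1 h2. move: h3 h4; generalize (m * m) => x. lia.
Qed.

Lemma eps2 n : eps n * eps n = 1.
Proof. by rewrite /eps -signr_odd; case: (odd _); rewrite ?mulr1 ?mulrNN ?mulr1. Qed.

Lemma diag_ok m (b : int) :
  b = (-1) ^+ ((m * m.-1) %/ 2) * (1 + (-1) ^+ m) ->
  eps m.+1 + b = (-1) ^+ m.+1 * eps m.+1.
Proof.
move=> ->. rewrite /eps.
have := arith m.
move=> /(congr1 odd). rewrite !oddD /= oddM andbb => hp.
rewrite -[(-1) ^+ ((m * m.-1) %/ 2)]signr_odd -[(-1) ^+ (_.+1 * _ %/ 2)]signr_odd.
rewrite -[(-1) ^+ m]signr_odd -[(-1) ^+ m.+1]signr_odd /=.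
move: hp. case: (odd ((m * m.-1) %/ 2)); case: (odd ((m.+1 * m.+2) %/ 2)); case: (odd m) => //= _;
  by [].
Qed.

Definition Gm n nu (B : 'M[int]_nu) (s : seq 'I_nu) : 'M[int]_nu :=
  foldr (fun i acc => PLmx n B (thimble i) *m acc) 1%:M s.
Arguments Gm n {nu} B s : simpl never.

Lemma PL_mul n nu (B : 'M[int]_nu) m (X : 'M[int]_nu) k l :
  (PLmx n B (thimble m) *m X) k l =
  X k l + (k == m)%:R * (eps n * \sum_j B j m * X j l).
Proof.
rewrite !mxE.
have hi : forall j, iform B (delta_mx j 0) (thimble m) = B j m.
  move=> j; rewrite /iform /thimble trmx_delta -rowE -colE !mxE.
  by [].
under eq_bigr => j _ do rewrite !mxE hi mulrDl.
rewrite big_split /=; congr (_ + _).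
  rewrite (bigD1 k) //= eqxx mul1r big1 ?addr0 // => j /negbTE.
  by rewrite eq_sym => ->; rewrite mul0r.
rewrite eqxx andbT mulr_sumr mulr_sumr; apply: eq_bigr => j _.
ring.
Qed.

Lemma Gm_spec n nu (B : 'M[int]_nu) (s : seq 'I_nu) :
  sorted (fun a b : 'I_nu => (val a < val b)%N) s ->
  forall k l, Gm n B s k l =
    if k \in s then (k == l)%:R + eps n * \sum_j B j k *
         (if (j \in s) && (val k < val j)%N then Gm n B s j l else (j == l)%:R)
    else (k == l)%:R.
Proof.
elim: s => [|m s IH] /=.
  by move=> _ k l; rewrite /Gm /= !mxE.
move=> hs.
have [hall hs'] : all (fun b : 'I_nu => (val m < val b)%N) s /\ sorted (fun a b : 'I_nu => (val a < val b)%N) s.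
  move: hs; rewrite path_sortedE; first by case/andP.
  by move=> a b c; apply: ltn_trans.
have IH' := IH hs'.
have mnot : m \notin s.
  apply/negP => /(allP hall); by rewrite ltnn.
have hGm : Gm n B (m :: s) = PLmx n B (thimble m) *m Gm n B s by [].
have hG : forall j l, j != m -> Gm n B (m :: s) j l = Gm n B s j l.
  by move=> j l /negbTE hj; rewrite hGm PL_mul hj mul0r addr0.
move=> k l.
rewrite in_cons.
case: (eqVneq k m) => [->|hkm] /=.
  rewrite {1}hGm PL_mul eqxx mul1r IH' (negbTE mnot); congr (_ + _ * _).
  apply: eq_bigr => j _; congr (_ * _).
  case hj: (j \in s).
    have := allP hall j hj => ->; rewrite in_cons hj orbT /= hG //.
    by apply/eqP => E; move: hj; rewrite E (negbTE mnot).
  rewrite IH' in_cons hj orbF.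
  by case: (eqVneq j m) => [->|] /=; rewrite ?ltnn ?andbF.
rewrite hG // IH'.
rewrite ?(negbTE hkm) /=.
case hk: (k \in s) => //.
congr (_ + _ * _); apply: eq_bigr => j _; congr (_ * _).
case: (eqVneq j m) => [->|hjm] /=.
  have hmk := allP hall k hk.
  by rewrite (negbTE mnot) in_cons eqxx /= ltnNge (ltnW hmk).
by rewrite hG // in_cons (negbTE hjm).
Qed.

Lemma mono_spec n nu (B : 'M[int]_nu) k l :
  monodromy n B k l = (k == l)%:R + eps n * \sum_j B j k *
         (if (val k < val j)%N then monodromy n B j l else (j == l)%:R).
Proof.
have hs : sorted (fun a b : 'I_nu => (val a < val b)%N) (enum 'I_nu).
  by have := iota_ltn_sorted 0 nu; rewrite -val_enum_ord sorted_map.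
rewrite /monodromy -/(Gm n B _) Gm_spec // mem_enum.
by under eq_bigr => j _ do rewrite mem_enum.
Qed.

Lemma sum_delta nu (i : 'I_nu) (F : 'I_nu -> int) :
  \sum_k (i == k)%:R * F k = F i.
Proof.
rewrite (bigD1 i) //= eqxx mul1r big1 ?addr0 // => k /negbTE.
by rewrite eq_sym => ->; rewrite mul0r.
Qed.

Theorem proposition4 (n nu : nat) (B : 'M[int]_nu) :
  (0 < n)%N ->
  (* the intersection form of the (n-1)-dimensional V_t is (-1)^{n-1}-symmetric *)
  B^T = (-1) ^+ (n.-1) *: B ->
  (* self-intersection of the vanishing cycle (boundary of a thimble) *)
  (forall i : 'I_nu,
      B i i = (-1) ^+ ((n.-1 * n.-2) %/ 2) * (1 + (-1) ^+ n.-1)) ->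
  monodromy n B = ((-1) ^+ n) *: (Var n B *m (VarInv n B)^T).
Proof.
case: n => // m _ /= hsym hdiag.
set V := VarInv m.+1 B.
set h := monodromy m.+1 B.
set e := eps m.+1.
have he : e \is a GRing.unit by rewrite /e /eps -signr_odd; case: (odd _).
have hU : V \in unitmx.
  rewrite -unitmx_tr unitmxE det_trig.
    apply: (big_ind (fun x : int => x \is a GRing.unit)) => //.
      by move=> x y hx hy; rewrite unitrM hx hy.
    by move=> i _; rewrite !mxE eqxx ltnn mulr1 mul0r subr0.
  apply/is_trig_mxP => i j hij; have hji : (j == i) = false by apply/negP => /eqP E; move: hij; rewrite E ltnn.
  by rewrite !mxE hji ltnNge (ltnW hij) mulr0 mul0r subr0.
have L : forall i l, (V *m h) i l = e * (i == l)%:R + (~~ (i < l)%N)%:R * B l i.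
  move=> i l; rewrite !mxE.
  under eq_bigr => k _ do rewrite /V !mxE mulrBl.
  rewrite sumrB.
  have -> : \sum_k eps m.+1 * (i == k)%:R * h k l = e * h i l.
    rewrite (bigD1 i) //= eqxx mulr1 big1 ?addr0 // => k /negbTE.
    by rewrite eq_sym => ->; rewrite mulr0 mul0r.
  have hi := mono_spec (m.+1) _ B i l; rewrite -/h -/e in hi.
  rewrite hi mulrDr mulrA eps2 mul1r -addrA; congr (_ + _).
  rewrite -sumrB -(sum_delta _ l (fun j : 'I_nu => (~~ (i < j)%N)%:R * B j i)); apply: eq_bigr => j _.
  case: (i < j)%N => /=.
    by rewrite mul1r mul0r mulr0 subrr.
  by rewrite !mul0r !mul1r subr0 eq_sym mulrC.
have key : V *m h = (-1) ^+ m.+1 *: V^T.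
  apply/matrixP => i l; rewrite L !mxE.
  have hB : B i l = (-1) ^+ m * B l i.
    by have := congr1 (fun M : 'M[int]_nu => M l i) hsym; rewrite !mxE.
  case: (eqVneq i l) => [<-|hil].
    rewrite ltnn /= mulr1 mul0r subr0 mul1r; exact: diag_ok (hdiag i).
  rewrite hB /e.
  case: (ltngtP i l) => [h1|h1|h1] /=.
  - by rewrite !(mulr0, mul0r, addr0, subr0, add0r, subrr).
  - rewrite !mulr0 !mul1r add0r sub0r exprS -signr_odd.
    by case: (odd m); rewrite /= ?expr0 ?expr1 ?mulN1r ?mul1r ?opprK.
  - by move: hil; rewrite (val_inj h1) eqxx.
rewrite /Var -/V scalemxAr -key mulKmx //.
Qed.
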